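(* Fix an integer $k\geq1$ and $V=\{0,\ldots,k\}$. If a Boolean function $\varphi$ on $V$ is fragmentable, then $\mathrm{eul}(\varphi)=0$.
   Context: A valuation is a subset $\nu\subseteq V$; $\nu^{(l)}$ is $\nu$ with membership of $l$ flipped. A Boolean function on $V$ is a map $\varphi:2^V\to\{\text{false},\text{true}\}$; $\mathrm{eul}(\varphi)=\sum_{\nu:\varphi(\nu)=\text{true}}(-1)^{|\nu|}$. $\varphi$ is degenerate if there is $l\in V$ with $\varphi(\nu)=\varphi(\nu^{(l)})$ for all $\nu$. Two functions are disjoint if no valuation satisfies both. A $\neg$-$\vee$-template is a Boolean circuit all of whose internal gates are $\neg$- or $\vee$-gates (a single leaf is allowed); its leaves $l_0,\ldots,l_n$ are holes. $T[\varphi_0,\ldots,\varphi_n]$ is the function obtained by substituting $\varphi_i$ for $l_i$; it is deterministic if, for every $\vee$-gate of the template, any two distinct inputs compute disjoint functions. $\varphi$ is fragmentable if there exist a $\neg$-$\vee$-template $T$ and degenerate functions $\varphi_0,\ldots,\varphi_n$ (one per hole) such that $T[\varphi_0,\ldots,\varphi_n]$ is deterministic and equivalent to $\varphi$. *)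

(* Defs.v *)
From mathcomp Require Import all_boot all_order all_algebra.
Set Implicit Arguments. Unset Strict Implicit. Unset Printing Implicit Defensive.
Import GRing.Theory Num.Theory.

(* The variable set V = {0,...,k} is 'I_k.+1; a valuation is a subset of V. *)
Definition valuation (k : nat) := {set 'I_k.+1}.

Definition bfun (k : nat) := valuation k -> bool.

Definition flipv (k : nat) (nu : valuation k) (l : 'I_k.+1) : valuation k :=
  if l \in nu then nu :\ l else l |: nu.

Definition eul (k : nat) (phi : bfun k) : int :=
  (\sum_(nu : {set 'I_k.+1} | phi nu) (-1) ^+ #|nu|)%R.

Definition degenerate (k : nat) (phi : bfun k) : Prop :=
  exists l : 'I_k.+1, forall nu : valuation k, phi nu = phi (flipv nu l).

Definition disjoint_fun (k : nat) (phi psi : bfun k) : Prop :=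
  forall nu : valuation k, ~~ (phi nu && psi nu).

(* A not-or template, presented as a formula tree; leaves are holes, indexed
   by natural numbers (a hole index may be used at several leaves, modelling
   sharing of a leaf in the circuit). *)
Inductive template : Type :=
| Hole of nat
| NegG of template
| OrG of seq template.

Fixpoint subst (k : nat) (T : template) (f : nat -> bfun k) : bfun k :=
  match T with
  | Hole i => f i
  | NegG T' => fun nu => ~~ subst T' f nu
  | OrG Ts => fun nu => (fix any (l : seq template) : bool :=
                          match l with
                          | [::] => false
                          | T' :: l' => subst T' f nu || any l'
                          end) Ts
  end.

Fixpoint holes (T : template) : seq nat :=
  match T with
  | Hole i => [:: i]
  | NegG T' => holes T'
  | OrG Ts => (fix hs (l : seq template) : seq nat :=
                 match l with
                 | [::] => [::]
                 | T' :: l' => holes T' ++ hs l'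
                 end) Ts
  end.

Fixpoint deterministic (k : nat) (T : template) (f : nat -> bfun k) : Prop :=
  match T with
  | Hole _ => True
  | NegG T' => deterministic T' f
  | OrG Ts =>
      (forall i j : nat, i < size Ts -> j < size Ts -> i <> j ->
         disjoint_fun (subst (nth (Hole 0) Ts i) f) (subst (nth (Hole 0) Ts j) f))
      /\ (fix alld (l : seq template) : Prop :=
            match l with
            | [::] => True
            | T' :: l' => deterministic T' f /\ alld l'
            end) Ts
  end.

Definition fragmentable (k : nat) (phi : bfun k) : Prop :=
  exists (T : template) (f : nat -> bfun k),
    (forall i, i \in holes T -> degenerate (f i)) /\
    deterministic T f /\
    (forall nu : valuation k, subst T f nu = phi nu).

(* Main.v *)
Require Import Defs.
From mathcomp Require Import all_boot all_order all_algebra.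
Import GRing.Theory Num.Theory.
Local Open Scope ring_scope.

Lemma flipv_sign k (nu : valuation k) l :
  (-1) ^+ #|flipv nu l| = - ((-1) ^+ #|nu|) :> int.
Proof.
rewrite /flipv; case: ifP => H.
  by rewrite [in RHS](cardsD1 l nu) H exprS mulN1r opprK.
by rewrite cardsU1 H exprS mulN1r.
Qed.

Lemma flipvK k l : involutive (fun nu : valuation k => flipv nu l).
Proof.
move=> nu /=; rewrite {2}/flipv; case: (boolP (l \in nu)) => H.
  by rewrite /flipv setD11 setD1K.
by rewrite /flipv setU11 setU1K.
Qed.

Lemma eul_degen k (phi : bfun k) : degenerate phi -> eul phi = 0.
Proof.
case=> l Hl; rewrite /eul.
set S := \sum_(nu | _) _.
have : S = - S.
  rewrite {1}/S (reindex_inj (can_inj (@flipvK k l))) /= /S.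
  rewrite -sumrN; apply: eq_big => nu; first by rewrite -Hl.
  by move=> _; rewrite flipv_sign.
move/eqP; rewrite -subr_eq0 opprK -mulr2n mulrn_eq0 /=.
by move/eqP.
Qed.

Lemma eul_ext k (p q : bfun k) : (forall nu, p nu = q nu) -> eul p = eul q.
Proof. by move=> H; rewrite /eul; apply: eq_bigl => nu; rewrite /= H. Qed.

Lemma eul_neg k (phi : bfun k) : eul (fun nu => ~~ phi nu) = - eul phi.
Proof.
have H0 : eul (fun _ : valuation k => true) = 0.
  by apply: eul_degen; exists ord0.
move: H0; rewrite /eul (bigID phi) /= => /eqP; rewrite addr_eq0 => /eqP ->.
by rewrite opprK.
Qed.

Lemma eul_or k (phi psi : bfun k) : disjoint_fun phi psi ->
  eul (fun nu => phi nu || psi nu) = eul phi + eul psi.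
Proof.
move=> D; rewrite /eul (bigID phi) /=; congr (_ + _); apply: eq_bigl => nu /=.
  by case: (phi nu); rewrite ?andbF.
by move: (D nu); case: (phi nu); case: (psi nu).
Qed.

Fixpoint allT (P : template -> Prop) (l : seq template) : Prop :=
  match l with [::] => True | T :: l' => P T /\ allT P l' end.

Fixpoint anyf k (f : nat -> bfun k) (l : seq template) (nu : valuation k) : bool :=
  match l with [::] => false | T :: l' => subst T f nu || anyf k f l' nu end.

Fixpoint hs (l : seq template) : seq nat :=
  match l with [::] => [::] | T :: l' => holes T ++ hs l' end.

Fixpoint alld k (f : nat -> bfun k) (l : seq template) : Prop :=
  match l with [::] => True | T :: l' => deterministic T f /\ alld k f l' end.

Arguments anyf {k}.
Arguments alld {k}.

Definition template_ind' (P : template -> Prop)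
  (H1 : forall i, P (Hole i)) (H2 : forall T, P T -> P (NegG T))
  (H3 : forall Ts, allT P Ts -> P (OrG Ts)) : forall T, P T :=
  fix IH (T : template) : P T :=
    match T with
    | Hole i => H1 i
    | NegG T' => H2 T' (IH T')
    | OrG Ts => H3 Ts ((fix go (l : seq template) : allT P l :=
                         match l with
                         | [::] => I
                         | T' :: l' => conj (IH T') (go l')
                         end) Ts)
    end.

Lemma det_or k (f : nat -> bfun k) Ts : deterministic (OrG Ts) f ->
  (forall i j : nat, (i < size Ts)%N -> (j < size Ts)%N -> i <> j ->
         disjoint_fun (subst (nth (Hole 0) Ts i) f) (subst (nth (Hole 0) Ts j) f))
  /\ alld f Ts.
Proof.
move=> [H1 H2]; split => //; elim: Ts {H1} H2 => //= T Ts IH [a b]; split => //.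
exact: IH.
Qed.

Lemma subst_or k (f : nat -> bfun k) Ts nu : subst (OrG Ts) f nu = anyf f Ts nu.
Proof. by elim: Ts => //= T Ts IH; rewrite -IH. Qed.

Lemma anyf_nth k (f : nat -> bfun k) l nu : anyf f l nu ->
  exists2 j, (j < size l)%N & subst (nth (Hole 0) l j) f nu.
Proof.
elim: l => [|T l IH] //= /orP [H|/IH [j Hj Hs]]; first by exists 0%N.
by exists j.+1.
Qed.

Lemma main k (f : nat -> bfun k) T :
  (forall i, i \in holes T -> degenerate (f i)) -> deterministic T f ->
  eul (subst T f) = 0.
Proof.
elim/template_ind': T => [i|T IH|Ts IH] Hh Hd.
- by apply: eul_degen; apply: Hh; rewrite /= inE.
- rewrite /= eul_neg IH //; rewrite oppr0 //.
- change (holes (OrG Ts)) with (hs Ts) in Hh.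
  case/det_or: Hd => Hdis Hal.
  rewrite (@eul_ext _ _ (anyf f Ts)); last exact: subst_or.
  elim: Ts IH Hh Hdis Hal => [|T Ts IHs] /=.
    by move=> *; rewrite /eul big_pred0.
  move=> [PT PTs] Hh Hdis [dT dTs].
  rewrite eul_or.
    rewrite PT //; last by move=> i Hi; apply: Hh; rewrite mem_cat Hi.
    rewrite IHs // ?add0r //.
      by move=> i Hi; apply: Hh; rewrite mem_cat Hi orbT.
    by move=> i j Hi Hj Hij; apply: (Hdis i.+1 j.+1) => //; case.
  move=> nu; apply/negP => /andP [H1 /anyf_nth [j Hj H2]].
  by move: (Hdis 0%N j.+1 isT Hj ltac:(by [])) => /(_ nu) /=; rewrite H1 H2.
Qed.

Local Close Scope ring_scope.

Theorem proposition4p6 (k : nat) (hk : 1 <= k) (phi : bfun k) :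
  fragmentable phi -> eul phi = 0%R.
Proof.
case=> T [f [Hh [Hd He]]].
rewrite -(@main k f T Hh Hd); apply: eul_ext => nu; by rewrite He.
Qed.
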